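(* Let $(M,\mathcal M,m)$ be a probability space, $D_0\supseteq D_1\supseteq\cdots$ measurable sets with $m(D_N)\to0$ as $N\to\infty$, $\mathcal I\subseteq\mathcal M$ a sub-$\sigma$-algebra, and $\mathcal G_N:=\mathcal I\vee\sigma(A\in\mathcal M: A\subseteq D_N)$. Then, with $\mathcal N:=\{A\in\mathcal M:m(A)=0\}$, $\bigcap_{N=0}^\infty(\mathcal G_N\vee\mathcal N)\subseteq\mathcal I\vee\mathcal N$. *)

(* Defs.v *)
From HB Require Import structures.
From mathcomp Require Import all_boot all_order all_algebra.
From mathcomp Require Import all_classical all_reals all_analysis.
Set Implicit Arguments. Unset Strict Implicit. Unset Printing Implicit Defensive.
Import Order.TTheory GRing.Theory Num.Theory.
Local Open Scope classical_set_scope.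
Local Open Scope ring_scope.

Definition sigma_join (T : Type) (F G : set (set T)) : set (set T) :=
  <<s F `|` G >>.

Definition trace_sets (d : measure_display) (T : measurableType d) (D : set T)
  : set (set T) := [set A | measurable A /\ A `<=` D].

Definition null_sets (d : measure_display) (T : measurableType d)
  (R : realType) (m : set T -> \bar R) : set (set T) :=
  [set A | measurable A /\ m A = 0%E].

(* Main.v *)
Require Import Defs.
From HB Require Import structures.
From mathcomp Require Import all_boot all_order all_algebra.
From mathcomp Require Import all_classical all_reals all_analysis.
Import Order.TTheory GRing.Theory Num.Theory.
Local Open Scope classical_set_scope.
Local Open Scope ring_scope.

Section sa.
Context {T : Type} (S : set (set T)) (hS : sigma_algebra setT S).

Lemma sa_C A : S A -> S (~` A).
Proof. by case: hS => _ hC _ SA; rewrite -setTD; apply: hC. Qed.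

Lemma sa_U A B : S A -> S (B) -> S (A `|` B).
Proof.
case: hS => h0 _ hU SA SB; rewrite -bigcup2E; apply: hU => -[|[|n]] //=.
Qed.

Lemma sa_I A B : S A -> S B -> S (A `&` B).
Proof.
move=> SA SB; rewrite -[A `&` B]setCK setCI; apply: sa_C; apply: sa_U; exact: sa_C.
Qed.

Lemma sa_D A B : S A -> S B -> S (A `\` B).
Proof. by move=> SA SB; rewrite setDE; apply: sa_I => //; apply: sa_C. Qed.

Lemma sa_bigcup (F : (set T)^nat) : (forall k, S (F k)) -> S (\bigcup_k F k).
Proof. by case: hS => _ _ hU; apply: hU. Qed.

Lemma sa_bigcap (F : (set T)^nat) : (forall k, S (F k)) -> S (\bigcap_k F k).
Proof.
move=> SF; rewrite -[X in S X]setCK setC_bigcap; apply: sa_C; apply: sa_bigcup.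
by move=> k; apply: sa_C.
Qed.
End sa.

Definition sdiff {T} (A B : set T) := (A `\` B) `|` (B `\` A).

Theorem lemma4p4 (d : measure_display) (M : measurableType d) (R : realType)
  (m : probability M R) (D : nat -> set M) (I : set (set M))
  (hDmeas : forall N, measurable (D N))
  (hDdec : forall N, D N.+1 `<=` D N)
  (hDlim : (m (D N) @[N --> \oo] --> 0%E))
  (hIsig : sigma_algebra setT I) (hIsub : I `<=` measurable) :
  \bigcap_N sigma_join (sigma_join I (trace_sets (D N))) (null_sets m)
    `<=` sigma_join I (null_sets m).
Proof.
pose F N := [set A : set M | measurable A /\
   exists2 B, I B & m.-negligible (sdiff A B `\` D N)].
have FS N : sigma_algebra setT (F N).
  split.
  - split => //; exists set0; first by case: hIsig.
    by apply: (negligibleS _ (negligible_set0 m)) => x [[[]|[]]].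
  - move=> A [mA [B IB nB]]; split; first exact: measurableD.
    exists (setT `\` B); first by case: hIsig => _ h _; apply: h.
    apply: (negligibleS _ nB) => x /=; rewrite /sdiff /setD /setU /=.
    by have := lem (A x); have := lem (B x); tauto.
  - move=> A FA; split; first by apply: bigcupT_measurable => k; case: (FA k).
    have /choice [B hB] : forall k, exists B, I B /\ m.-negligible (sdiff (A k) B `\` D N).
      by move=> k; case: (FA k) => _ [B IB nB]; exists B.
    exists (\bigcup_k B k); first by apply: sa_bigcup => // k; case: (hB k).
    apply: (negligibleS _ (negligible_bigcup (fun k => (hB k).2))).
    move=> x [[[[k _ Akx] nBx]|[[k _ Bkx] nAx]] nD].
    + exists k => //; split => //; left; split => // Bx; apply: nBx; by exists k.
    + exists k => //; split => //; right; split => // Ax; apply: nAx; by exists k.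
have GF N : sigma_join (sigma_join I (trace_sets (D N))) (null_sets m) `<=` F N.
  apply: smallest_sub => //; move=> A [].
  - apply: smallest_sub => // {}A [IA|[mA AD]].
    + split; first exact: hIsub.
      exists A => //; apply: (negligibleS _ (negligible_set0 m)).
      by move=> x [[[]|[]]].
    + split => //; exists set0; first by case: hIsig.
      apply: (negligibleS _ (negligible_set0 m)).
      by move=> x [[[Ax _]|[]] nD]; case: nD; apply: AD.
  - move=> [mA mA0]; split => //; exists set0; first by case: hIsig.
    exists A; split => //; move=> x [[[Ax _]|[]] _] //.
move=> X hX.
have FX N : F N X by apply: GF; apply: hX.
have mX : measurable X by case: (FX 0%N).
have /choice [B hB] : forall N, exists B, I B /\ m.-negligible (sdiff X B `\` D N).
  by move=> N; case: (FX N) => _ [B IB nB]; exists B.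
pose Bl := \bigcup_K \bigcap_j B (K + j)%N.
have IBl : I Bl.
  apply: sa_bigcup => // K; apply: sa_bigcap => // j; exact: (hB _).1.
have mBl : measurable Bl by exact: hIsub.
have Dle n N : (N <= n)%N -> D n `<=` D N.
  elim: n => [|n IH]; first by rewrite leqn0 => /eqP ->.
  rewrite leq_eqVlt => /orP[/eqP -> //|]; rewrite ltnS => /IH.
  exact: subset_trans (hDdec n).
have mDinf : measurable (\bigcap_N D N) by exact: bigcapT_measurable.
have Dinf0 : m (\bigcap_N D N) = 0%E.
  have h1 := @nonincreasing_cvg_mu _ _ _ m D.
  have h2 : (m \o D) @ \oo --> m (\bigcap_N D N).
    apply: h1 => //.
      by apply: (le_lt_trans (probability_le1 m (hDmeas 0%N))); rewrite ltry.
    by move=> a b ab; apply/subsetPset; apply: Dle.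
  exact: (cvg_unique (@ereal_hausdorff R) h2 hDlim).
have nZ : m.-negligible ((\bigcup_N (sdiff X (B N) `\` D N)) `|` \bigcap_N D N).
  apply: negligibleU; first exact: negligible_bigcup (fun k => (hB k).2).
  by exists (\bigcap_N D N); split.
have sub : sdiff X Bl `<=` (\bigcup_N (sdiff X (B N) `\` D N)) `|` \bigcap_N D N.
  move=> x hx; have [Dx|nDx] := pselect ((\bigcap_N D N) x); first by right.
  left; have [N _ nDN] : exists2 N, True & ~ D N x.
    apply: contrapT => hn; apply: nDx => N _; apply: contrapT => nD.
    by apply: hn; exists N.
  case: hx => [[Xx nBl]|[[K _ hK] nXx]].
  - have [j nBj] : exists j, ~ B (N + j)%N x.
      apply: contrapT => hn; apply: nBl; exists N => // j _.
      by apply: contrapT => nb; apply: hn; exists j.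
    exists (N + j)%N => //; split; first by rewrite /sdiff; left; split.
    by move=> Dx; apply: nDN; exact: (Dle (N + j)%N N (leq_addr _ _) x Dx).
  - exists (K + N)%N => //; split; first by rewrite /sdiff; right; split => //; apply: hK.
    by move=> Dx; apply: nDN; exact: (Dle (K + N)%N N (leq_addl _ _) x Dx).
have null1 : null_sets m (Bl `\` X).
  split; first exact: measurableD.
  apply: (measure_negligible (measurableD mBl mX)).
  by apply: (negligibleS _ nZ) => x hx; apply: sub; right.
have null2 : null_sets m (X `\` Bl).
  split; first exact: measurableD.
  apply: (measure_negligible (measurableD mX mBl)).
  by apply: (negligibleS _ nZ) => x hx; apply: sub; left.
have XE : X = (Bl `\` (Bl `\` X)) `|` (X `\` Bl).
  apply/seteqP; split => x /=; rewrite /setD /setU /=;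
  by have := lem (X x); have := lem (Bl x); tauto.
rewrite XE /sigma_join; have SS := @smallest_sigma_algebra M setT (I `|` null_sets m).
have := (@sa_U M _ SS (Bl `\` (Bl `\` X)) (X `\` Bl)); apply; first (have := (@sa_D M _ SS Bl (Bl `\` X)); apply).
- by apply: sub_sigma_algebra; left.
- by apply: sub_sigma_algebra; right.
- by apply: sub_sigma_algebra; right.
Qed.
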